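(* Let $X$ be a compact metric space and $f:X\dashrightarrow X$ a continuous open-dense defined map which is good with respect to iterates. 1) If $\hat\mu$ is a positive strong submeasure on $\Gamma_{f,\infty}$ with $(\sigma_f)_*(\hat\mu)=\hat\mu$, then $\mu=(\pi_1)_*(\hat\mu)$ satisfies $f_*(\mu)\ge\mu$. 2) If $0\ne\mu_0\in SM^+(X)$ satisfies $f_*(\mu_0)=\mu_0$, then there exists a non-zero positive Borel measure $\hat\mu_0$ on $\Gamma_{f,\infty}$ with $(\sigma_f)_*(\hat\mu_0)=\hat\mu_0$, $\|\hat\mu_0\|=\|\mu_0\|$ and $(\pi_1)_*(\hat\mu_0)\le\mu_0$. Moreover the set $\{\hat\mu\in SM^+(\Gamma_{f,\infty}):(\pi_1)_*(\hat\mu)\le\mu_0,\ (\sigma_f)_*(\hat\mu)=\hat\mu\}$ has a largest element.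
   Context: Positive strong submeasures on a compact metric space $W$ ($SM^+(W)$): sub-linear, bounded, non-decreasing maps $C^0(W)\to\mathbb{R}$, with norm $\|\mu\|$ the least $C$ with $|\mu(\varphi)|\le C\|\varphi\|_{L^\infty}$; $\le$ is pointwise inequality. For continuous $g$, $g_*(\mu)(\varphi)=\mu(\varphi\circ g)$. For a continuous open-dense defined map $f:X\dashrightarrow X$ (continuous on the open dense set $\mathrm{OpenDom}(f)$, $I(f)$ its complement), $f_*(\mu)(\varphi)=\inf\{\mu(\psi):\psi\in C^0(X),\psi\ge E(\varphi\circ f)\}$, where $E(\varphi\circ f)$ equals $\varphi\circ f$ on $\mathrm{OpenDom}(f)$ and $\limsup_{y\in\mathrm{OpenDom}(f),y\to x}\varphi(f(y))$ at other $x$. $f$ is good with respect to iterates if $\Omega_{f,\infty}=\{x\in\mathrm{OpenDom}(f):f^n(x)\notin I(f)\ \forall n\}$ is dense and its complement nowhere dense. $\Gamma_{f,\infty}$ is the closure in $X^{\mathbb{N}}$ (product topology) of $\{(x,f(x),f^2(x),\ldots):x\in\Omega_{f,\infty}\}$, $\sigma_f$ the shift on it and $\pi_1$ the first-coordinate projection. *)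

(* Defs.v *)
From Stdlib Require Import Reals Lra Lia ClassicalEpsilon.
Open Scope R_scope.



Definition is_lower_bound (S : R -> Prop) (m : R) : Prop := forall r, S r -> m <= r.
Definition is_glb (S : R -> Prop) (m : R) : Prop :=
  is_lower_bound S m /\ forall m', is_lower_bound S m' -> m' <= m.
Definition Rinf (S : R -> Prop) : R := epsilon (inhabits 0) (fun m => is_glb S m).

Definition is_metric {X : Type} (d : X -> X -> R) : Prop :=
  (forall x y, 0 <= d x y) /\ (forall x y, d x y = 0 <-> x = y) /\
  (forall x y, d x y = d y x) /\ (forall x y z, d x z <= d x y + d y z).

Definition seq_compact {X : Type} (d : X -> X -> R) : Prop :=
  forall u : nat -> X, exists (phi : nat -> nat) (l : X),
    (forall n, (phi n < phi (S n))%nat) /\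
    forall eps, 0 < eps -> exists N, forall n, (N <= n)%nat -> d (u (phi n)) l < eps.

Definition is_open {X : Type} (d : X -> X -> R) (A : X -> Prop) : Prop :=
  forall x, A x -> exists r, 0 < r /\ forall y, d x y < r -> A y.
Definition is_dense {X : Type} (d : X -> X -> R) (A : X -> Prop) : Prop :=
  forall x eps, 0 < eps -> exists y, A y /\ d x y < eps.
Definition closure {X : Type} (d : X -> X -> R) (A : X -> Prop) (z : X) : Prop :=
  forall eps, 0 < eps -> exists a, A a /\ d z a < eps.
Definition nowhere_dense {X : Type} (d : X -> X -> R) (A : X -> Prop) : Prop :=
  ~ exists x r, 0 < r /\ forall z, d x z < r -> closure d A z.

Definition C0 {X : Type} (d : X -> X -> R) (phi : X -> R) : Prop :=
  forall x eps, 0 < eps -> exists delta, 0 < delta /\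
    forall y, d x y < delta -> Rabs (phi x - phi y) < eps.

(* ---------- Continuous open-dense defined maps ----------
   The map is the pair (U, f): U = OpenDom(f) open dense, f continuous on U;
   values of f outside U are irrelevant. I(f) = complement of U. *)
Definition open_dense_map {X : Type} (d : X -> X -> R) (U : X -> Prop) (f : X -> X) : Prop :=
  is_open d U /\ is_dense d U /\
  forall x, U x -> forall eps, 0 < eps -> exists delta, 0 < delta /\
    forall y, U y -> d x y < delta -> d (f x) (f y) < eps.

Definition Omega {X : Type} (U : X -> Prop) (f : X -> X) (x : X) : Prop :=
  U x /\ forall n : nat, U (Nat.iter n f x).

Definition good_iterates {X : Type} (d : X -> X -> R) (U : X -> Prop) (f : X -> X) : Prop :=
  is_dense d (Omega U f) /\ nowhere_dense d (fun x => ~ Omega U f x).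

(* Gamma_{f,infty}: closure in X^N (product topology) of the orbits of points of Omega *)
Definition Gamma {X : Type} (d : X -> X -> R) (U : X -> Prop) (f : X -> X) (s : nat -> X) : Prop :=
  forall (N : nat) eps, 0 < eps -> exists x, Omega U f x /\
    forall n, (n <= N)%nat -> d (s n) (Nat.iter n f x) < eps.

Definition GammaT {X : Type} (d : X -> X -> R) (U : X -> Prop) (f : X -> X) : Type :=
  { s : nat -> X | Gamma d U f s }.

Definition C0_Gamma {X : Type} (d : X -> X -> R) (U : X -> Prop) (f : X -> X)
  (phi : GammaT d U f -> R) : Prop :=
  forall s eps, 0 < eps -> exists (N : nat) delta, 0 < delta /\
    forall t : GammaT d U f,
      (forall n, (n <= N)%nat -> d (proj1_sig s n) (proj1_sig t n) < delta) ->
      Rabs (phi s - phi t) < eps.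

Lemma iter_succ_r {X : Type} (f : X -> X) (n : nat) (x : X) :
  Nat.iter (S n) f x = Nat.iter n f (f x).
Proof. induction n as [|n IH]; simpl; [reflexivity|]. simpl in IH. rewrite IH. reflexivity. Qed.

Lemma Gamma_shift {X : Type} (d : X -> X -> R) (U : X -> Prop) (f : X -> X) (s : nat -> X) :
  Gamma d U f s -> Gamma d U f (fun n => s (S n)).
Proof.
  intros H N eps Heps. destruct (H (S N) eps Heps) as [x [[Hx Hit] Hd]].
  exists (f x). split.
  - split.
    + apply (Hit 1%nat).
    + intro n. rewrite <- iter_succ_r. apply Hit.
  - intros n Hn. rewrite <- iter_succ_r. apply Hd. lia.
Qed.

Definition sigma_f {X : Type} (d : X -> X -> R) (U : X -> Prop) (f : X -> X)
  (s : GammaT d U f) : GammaT d U f :=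
  exist _ (fun n => proj1_sig s (S n)) (Gamma_shift d U f (proj1_sig s) (proj2_sig s)).
Definition pi_1 {X : Type} (d : X -> X -> R) (U : X -> Prop) (f : X -> X)
  (s : GammaT d U f) : X := proj1_sig s O.

(* ---------- Positive strong submeasures ----------
   A functional mu on the continuous functions (those satisfying C);
   its values on other functions are irrelevant. *)
Definition is_SMplus {W : Type} (C : (W -> R) -> Prop) (mu : (W -> R) -> R) : Prop :=
  (forall phi psi, C phi -> C psi -> mu (fun w => phi w + psi w) <= mu phi + mu psi) /\
  (forall c phi, 0 <= c -> C phi -> mu (fun w => c * phi w) = c * mu phi) /\
  (exists K, forall phi M, C phi -> (forall w, Rabs (phi w) <= M) -> Rabs (mu phi) <= K * M) /\
  (forall phi psi, C phi -> C psi -> (forall w, phi w <= psi w) -> mu phi <= mu psi).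

(* linear (positive Borel measures = positive linear functionals, by Riesz) *)
Definition is_linear_fn {W : Type} (C : (W -> R) -> Prop) (mu : (W -> R) -> R) : Prop :=
  (forall phi psi, C phi -> C psi -> mu (fun w => phi w + psi w) = mu phi + mu psi) /\
  (forall c phi, C phi -> mu (fun w => c * phi w) = c * mu phi).

Definition SMnorm {W : Type} (C : (W -> R) -> Prop) (mu : (W -> R) -> R) : R :=
  Rinf (fun K => 0 <= K /\
    forall phi M, C phi -> (forall w, Rabs (phi w) <= M) -> Rabs (mu phi) <= K * M).

Definition SM_le {W : Type} (C : (W -> R) -> Prop) (mu nu : (W -> R) -> R) : Prop :=
  forall phi, C phi -> mu phi <= nu phi.
Definition SM_eq {W : Type} (C : (W -> R) -> Prop) (mu nu : (W -> R) -> R) : Prop :=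
  forall phi, C phi -> mu phi = nu phi.
Definition SM_nonzero {W : Type} (C : (W -> R) -> Prop) (mu : (W -> R) -> R) : Prop :=
  exists phi, C phi /\ mu phi <> 0.

Definition push {V W : Type} (g : V -> W) (mu : (V -> R) -> R) : (W -> R) -> R :=
  fun phi => mu (fun v => phi (g v)).

(* psi >= E(phi o f) pointwise *)
Definition dominates_E {X : Type} (d : X -> X -> R) (U : X -> Prop) (f : X -> X)
  (phi psi : X -> R) : Prop :=
  forall x, (U x -> phi (f x) <= psi x) /\
    (~ U x ->
      forall eps, 0 < eps -> exists delta, 0 < delta /\
        forall y, U y -> d x y < delta -> phi (f y) <= psi x + eps).

Definition pushf {X : Type} (d : X -> X -> R) (U : X -> Prop) (f : X -> X)
  (mu : (X -> R) -> R) : (X -> R) -> R :=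
  fun phi => Rinf (fun r => exists psi, C0 d psi /\ dominates_E d U f phi psi /\ r = mu psi).

(* Main.v *)
Require Import Defs.
From Stdlib Require Import Reals Lra Lia ZArith ClassicalEpsilon Classical FunctionalExtensionality.
From mathcomp Require classical_sets.
Set Bullet Behavior "Strict Subproofs".
Open Scope R_scope.

Lemma myZorn (T : Type) (P : (T -> Prop) -> Prop) :
  (forall F : (T -> Prop) -> Prop, (forall X, F X -> P X) ->
     (forall A B, F A -> F B -> (forall t, A t -> B t) \/ (forall t, B t -> A t)) ->
     P (fun a => exists2 X, F X & X a)) ->
  exists A, P A /\ forall B, (forall t, A t -> B t) -> ~ (forall t, B t -> A t) -> ~ P B.
Proof.
  intros H. destruct (@classical_sets.Zorn_bigcup T P) as [A [HA HB]].
  - intros F HFP Htot. apply H; [exact HFP| exact Htot].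
  - exists A. split; [exact HA|]. intros B H1 H2. apply HB. split; assumption.
Qed.

Ltac vsplit := split; [|split; [|split; [|split]]].
Ltac fext := let w := fresh "w" in apply functional_extensionality; intro w; try ring.

Section HBsec.
Variable W : Type.
Variable w0 : W.
Variable V : (W -> R) -> Prop.
Variable p : (W -> R) -> R.
Variable m : R.
Hypothesis HV0 : forall c, V (fun _ => c).
Hypothesis HVadd : forall x y, V x -> V y -> V (fun w => x w + y w).
Hypothesis HVscal : forall c x, V x -> V (fun w => c * x w).
Hypothesis Hpadd : forall x y, V x -> V y -> p (fun w => x w + y w) <= p x + p y.
Hypothesis Hphom : forall c x, 0 < c -> V x -> p (fun w => c * x w) = c * p x.
Hypothesis Hpm : forall c, c * m <= p (fun _ => c).

Definition valid (G : (W -> R) * R -> Prop) : Prop :=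
  (forall x a b, G (x,a) -> G (x,b) -> a = b) /\
  (forall x a, G (x,a) -> V x /\ a <= p x) /\
  (forall x a y b, G (x,a) -> G (y,b) -> G (fun w => x w + y w, a + b)) /\
  (forall x a c, G (x,a) -> G (fun w => c * x w, c * a)) /\
  (forall c, G (fun _ => c, c * m)).

Definition G0 (pr : (W -> R) * R) : Prop := exists c, pr = (fun _ => c, c * m).

Lemma valid_G0 : valid G0.
Proof.
  unfold valid, G0. vsplit.
  - intros x a b [c Hc] [c' Hc']. injection Hc as -> ->. injection Hc' as E ->.
    assert (c = c') by exact (equal_f E w0). subst; reflexivity.
  - intros x a [c Hc]. injection Hc as -> ->. split; [apply HV0|apply Hpm].
  - intros x a y b [c Hc] [c' Hc']. injection Hc as -> ->. injection Hc' as -> ->.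
    exists (c + c'). f_equal. ring.
  - intros x a c0 [c Hc]. injection Hc as -> ->. exists (c0 * c). f_equal. ring.
  - intros c. exists c. reflexivity.
Qed.

Lemma valid_union G : valid G -> (forall pr, G0 pr -> G pr) -> valid (fun pr => G pr \/ G0 pr).
Proof.
  intros [H1 [H2 [H3 [H4 H5]]]] Hs.
  assert (E : forall pr, G pr \/ G0 pr -> G pr) by (intros pr [h|h]; auto).
  vsplit.
  - intros x a b h1 h2. eapply H1; apply E; eauto.
  - intros x a h. apply (H2 x a (E _ h)).
  - intros x a y b h1 h2. left. apply H3; apply E; auto.
  - intros x a c h. left. apply H4; apply E; auto.
  - intros c. left. apply H5.
Qed.

Lemma one_step G z : valid G -> V z -> (forall a, ~ G (z,a)) ->
  exists G', valid G' /\ (forall pr, G pr -> G' pr) /\ exists al, G' (z, al).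
Proof.
  intros HG Hz Hnz. pose proof HG as [H1 [H2 [H3 [H4 H5]]]].
  set (E := fun r => exists y b, G (y,b) /\ r = b - p (fun w => y w + (-1) * z w)).
  assert (Hub : forall x a y b, G (x,a) -> G (y,b) ->
            b - p (fun w => y w + (-1) * z w) <= p (fun w => x w + z w) - a).
  { intros x a y b hx hy.
    pose proof (H3 _ _ _ _ hx hy) as hxy.
    destruct (H2 _ _ hxy) as [_ hle].
    destruct (H2 _ _ hx) as [Vx _]. destruct (H2 _ _ hy) as [Vy _].
    assert (Exy : (fun w => x w + y w) = (fun w => (fun w => x w + z w) w + (fun w => y w + (-1) * z w) w)) by fext.
    rewrite Exy in hle.
    pose proof (Hpadd (fun w => x w + z w) (fun w => y w + (-1) * z w)
        (HVadd _ _ Vx Hz) (HVadd _ _ Vy (HVscal (-1) _ Hz))). lra. }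
  assert (Hb : bound E).
  { exists (p (fun w => (fun _ => 0) w + z w) - 0 * m). intros r [y [b [hy ->]]].
    apply Hub; auto. }
  assert (Hne : exists r, E r).
  { exists (0 * m - p (fun w => (fun _ => 0) w + (-1) * z w)). exists (fun _ => 0), (0 * m). split; auto. }
  destruct (completeness E Hb Hne) as [al [Hal1 Hal2]].
  assert (Hlo : forall y b, G (y,b) -> b - p (fun w => y w + (-1) * z w) <= al).
  { intros y b hy. apply Hal1. exists y, b. auto. }
  assert (Hhi : forall x a, G (x,a) -> al <= p (fun w => x w + z w) - a).
  { intros x a hx. apply Hal2. intros r [y [b [hy ->]]]. apply Hub; auto. }
  set (G' := fun pr : (W -> R) * R => exists x a t, G (x,a) /\ pr = (fun w => x w + t * z w, a + t * al)).
  exists G'. split; [|split].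
  - vsplit.
    + intros u r1 r2 [x [a [t [hx e1]]]] [x' [a' [t' [hx' e2]]]].
      injection e1 as eu1 er1. injection e2 as eu2 er2. subst r1 r2.
      rewrite eu1 in eu2.
      destruct (Req_dec t t') as [<-|tne].
      * assert (x = x').
        { fext. pose proof (equal_f eu2 w) as e. simpl in e. lra. }
        subst x'. rewrite (H1 _ _ _ hx hx'). reflexivity.
      * exfalso. apply (Hnz (/ (t - t') * (a' + (-1) * a))).
        assert (ez : z = fun w => / (t - t') * ((fun w => x' w + (-1) * x w) w)).
        { fext. pose proof (equal_f eu2 w) as e. simpl in e. simpl. field_simplify_eq; [|lra].
          lra. }
        rewrite ez. apply H4. apply H3; auto.
    + intros u r [x [a [t [hx e]]]]. injection e as -> ->.
      destruct (H2 _ _ hx) as [Vx _]. split; [apply HVadd; auto|].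
      destruct (Rtotal_order t 0) as [tn|[t0|tp]].
      * set (s := - t).
        assert (hs : G (fun w => / s * x w, / s * a)) by (apply H4; auto).
        pose proof (Hlo _ _ hs) as hl.
        assert (Vx' : V (fun w => / s * x w + (-1) * z w)) by (apply HVadd; auto).
        pose proof (Hphom s _ ltac:(unfold s; lra) Vx') as hp.
        assert (ee : (fun w => s * (/ s * x w + (-1) * z w)) = (fun w => x w + t * z w)).
        { fext. unfold s. field. lra. }
        cbv beta in hp. rewrite ee in hp. rewrite hp.
        assert (s * (/ s * a) = a) by (unfold s; field; lra).
        assert (0 < s) by (unfold s; lra).
        assert (hh : s * (/ s * a - p (fun w => / s * x w + -1 * z w)) <= s * al) by (apply Rmult_le_compat_l; lra).
        unfold s in *. lra.
      * subst t. assert (ee : (fun w => x w + 0 * z w) = x) by fext. rewrite ee.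
        destruct (H2 _ _ hx). lra.
      * assert (hs : G (fun w => / t * x w, / t * a)) by (apply H4; auto).
        pose proof (Hhi _ _ hs) as hl.
        assert (Vx' : V (fun w => / t * x w + z w)) by (apply HVadd; auto).
        pose proof (Hphom t _ tp Vx') as hp.
        assert (ee : (fun w => t * (/ t * x w + z w)) = (fun w => x w + t * z w)).
        { fext. field. lra. }
        cbv beta in hp. rewrite ee in hp. rewrite hp.
        assert (hh : t * al <= t * (p (fun w => / t * x w + z w) - / t * a)) by (apply Rmult_le_compat_l; lra).
        assert (t * (/ t * a) = a) by (field; lra). lra.
    + intros u r v b [x [a [t [hx e]]]] [y [c [s [hy e']]]].
      injection e as -> ->. injection e' as -> ->.
      exists (fun w => x w + y w), (a + c), (t + s). split; auto.
      f_equal; [fext|ring].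
    + intros u r c [x [a [t [hx e]]]]. injection e as -> ->.
      exists (fun w => c * x w), (c * a), (c * t). split; auto. f_equal; [fext|ring].
    + intros c. exists (fun _ => c), (c * m), 0. split; auto. f_equal; [fext|ring].
  - intros [x a] hx. exists x, a, 0. split; auto. f_equal; [fext|ring].
  - exists al, (fun _ => 0), (0 * m), 1. split; auto. f_equal; [fext|ring].
Qed.

Theorem hahn_banach : exists L : (W -> R) -> R,
  (forall x y, V x -> V y -> L (fun w => x w + y w) = L x + L y) /\
  (forall c x, V x -> L (fun w => c * x w) = c * L x) /\
  (forall x, V x -> L x <= p x) /\ L (fun _ => 1) = m.
Proof.
  set (P := fun G => valid (fun pr => G pr \/ G0 pr)).
  destruct (myZorn _ P) as [A [HA HAm]].
  - intros F HFP Htot. unfold P.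
    set (Uc := fun a => exists2 X, F X & X a).
    assert (Hone : forall pr, Uc pr \/ G0 pr -> exists Y, P Y /\ (forall q, Y q -> Uc q) /\ (Y pr \/ G0 pr)).
    { intros pr [[X hX hp]|hp].
      - exists X. split; [apply HFP; auto|split; [|auto]]. intros q hq. exists X; auto.
      - exists (fun _ => False). split; [|split; [tauto|auto]].
        unfold P. pose proof valid_G0 as [a1 [a2 [a3 [a4 a5]]]].
        vsplit.
        + intros x a b [[]|h1] [[]|h2]. eauto.
        + intros x a [[]|h1]. apply (a2 _ _ h1).
        + intros x a y b [[]|h1] [[]|h2]. right. auto.
        + intros x a c [[]|h1]. right. auto.
        + intros c. right. auto. }
    assert (Htwo : forall pr1 pr2, Uc pr1 \/ G0 pr1 -> Uc pr2 \/ G0 pr2 ->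
       exists Y, P Y /\ (forall q, Y q -> Uc q) /\ (Y pr1 \/ G0 pr1) /\ (Y pr2 \/ G0 pr2)).
    { intros pr1 pr2 h1 h2.
      destruct h1 as [[X1 hX1 hp1]|hp1]; destruct h2 as [[X2 hX2 hp2]|hp2].
      - destruct (Htot X1 X2 hX1 hX2) as [s|s].
        + exists X2. split; [apply HFP; auto|split; [|auto]]. intros q hq. exists X2; auto.
        + exists X1. split; [apply HFP; auto|split; [|auto]]. intros q hq. exists X1; auto.
      - exists X1. split; [apply HFP; auto|split; [|auto]]. intros q hq. exists X1; auto.
      - exists X2. split; [apply HFP; auto|split; [|auto]]. intros q hq. exists X2; auto.
      - destruct (Hone pr1 (or_intror hp1)) as [Y [hY [hY2 _]]].
        exists Y. split; [auto|split; [auto|auto]]. }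
    vsplit.
    + intros x a b h1 h2. destruct (Htwo _ _ h1 h2) as [Y [[b1 _] [_ [k1 k2]]]]. eauto.
    + intros x a h. destruct (Hone _ h) as [Y [[_ [b2 _]] [_ k]]]. apply (b2 _ _ k).
    + intros x a y b h1 h2. destruct (Htwo _ _ h1 h2) as [Y [[_ [_ [b3 _]]] [hsub [k1 k2]]]].
      destruct (b3 _ _ _ _ k1 k2) as [q|q]; [left; apply hsub; auto | right; auto].
    + intros x a c h. destruct (Hone _ h) as [Y [[_ [_ [_ [b4 _]]]] [hsub k]]].
      destruct (b4 _ _ c k) as [q|q]; [left; apply hsub; auto | right; auto].
    + intros c. right. exists c. reflexivity.
  - set (G := fun pr => A pr \/ G0 pr).
    assert (Htot : forall z, V z -> exists a, G (z,a)).
    { intros z Vz. apply NNPP. intros Hn.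
      assert (Hn' : forall a, ~ G (z,a)) by (intros a ha; apply Hn; eauto).
      destruct (one_step G z HA Vz Hn') as [G' [HG' [Hsub [al Hal]]]].
      apply (HAm G').
      - intros t ht. apply Hsub. left; auto.
      - intros Hc. apply (Hn' al). left. apply Hc. auto.
      - unfold P. apply valid_union; auto. intros pr h. apply Hsub. right; auto. }
    pose proof HA as [H1 [H2 [H3 [H4 H5]]]].
    set (L := fun x => epsilon (inhabits 0) (fun a => G (x,a))).
    assert (HL : forall x, V x -> G (x, L x)).
    { intros x Vx. unfold L. apply epsilon_spec. apply Htot; auto. }
    exists L. split; [|split; [|split]].
    + intros x y Vx Vy. eapply H1; [apply HL; auto|]. apply H3; apply HL; auto.
    + intros c x Vx. eapply H1; [apply HL; auto|]. apply H4; apply HL; auto.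
    + intros x Vx. apply (H2 _ _ (HL x Vx)).
    + pose proof (H5 1) as h. rewrite Rmult_1_l in h. eapply H1; [apply HL; apply HV0|exact h].
Qed.
End HBsec.

Lemma le_eps a b : (forall eps, 0 < eps -> a <= b + eps) -> a <= b.
Proof.
  intros H. destruct (Rle_or_lt a b) as [h|h]; [exact h|].
  specialize (H ((a - b)/2) ltac:(lra)). lra.
Qed.

Lemma incr_ge (phi : nat -> nat) : (forall n, (phi n < phi (S n))%nat) -> forall n, (n <= phi n)%nat.
Proof. intros H n. induction n; [lia|]. specialize (H n). lia. Qed.

Lemma incr_mono (phi : nat -> nat) : (forall n, (phi n < phi (S n))%nat) ->
  forall a b, (a <= b)%nat -> (phi a <= phi b)%nat.
Proof. intros H a b hab. induction hab; [lia|]. specialize (H m). lia. Qed.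

Lemma incr_strict (phi : nat -> nat) : (forall n, (phi n < phi (S n))%nat) ->
  forall a b, (a < b)%nat -> (phi a < phi b)%nat.
Proof. intros H a b hab. pose proof (incr_mono phi H (S a) b hab). specialize (H a). lia. Qed.

Lemma Rabs_def2b a b : Rabs a <= b -> - b <= a /\ a <= b.
Proof. unfold Rabs. destruct (Rcase_abs a); intros; lra. Qed.

Lemma glb_exists (S : R -> Prop) : (exists r, S r) -> (exists m, is_lower_bound S m) ->
  exists m, is_glb S m.
Proof.
  intros [r Hr] [m Hm].
  set (E := fun x => S (- x)).
  assert (Hb : bound E).
  { exists (- m). intros x Ex. specialize (Hm _ Ex). lra. }
  assert (Hn : exists x, E x) by (exists (- r); unfold E; rewrite Ropp_involutive; exact Hr).
  destruct (completeness E Hb Hn) as [l [Hl1 Hl2]].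
  exists (- l). split.
  - intros y Sy. assert (E (- y)) by (unfold E; rewrite Ropp_involutive; exact Sy).
    specialize (Hl1 _ H). lra.
  - intros m' Hm'. assert (is_upper_bound E (- m')).
    { intros x Ex. specialize (Hm' _ Ex). lra. }
    specialize (Hl2 _ H). lra.
Qed.

Lemma Rinf_glb (S : R -> Prop) : (exists r, S r) -> (exists m, is_lower_bound S m) ->
  is_glb S (Rinf S).
Proof. intros h1 h2. unfold Rinf. apply epsilon_spec. apply glb_exists; auto. Qed.

Lemma Rinf_le (S : R -> Prop) m r : is_lower_bound S m -> S r -> Rinf S <= r.
Proof. intros hm hr. apply (Rinf_glb S); eauto. Qed.

Lemma le_Rinf (S : R -> Prop) m : (exists r, S r) -> is_lower_bound S m -> m <= Rinf S.
Proof. intros hr hm. apply (Rinf_glb S); eauto. Qed.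

Lemma Rinf_approx (S : R -> Prop) m eps : (exists r, S r) -> is_lower_bound S m -> 0 < eps ->
  exists r, S r /\ r < Rinf S + eps.
Proof.
  intros hr hm he. apply NNPP. intro Hn.
  assert (is_lower_bound S (Rinf S + eps)).
  { intros r Sr. apply Rnot_lt_le. intro h. apply Hn. eauto. }
  pose proof (le_Rinf S _ hr H). lra.
Qed.

Lemma Rinf_eq (S : R -> Prop) m : is_glb S m -> Rinf S = m.
Proof.
  intros Hm. assert (H : is_glb S (Rinf S)) by (unfold Rinf; apply epsilon_spec; eauto).
  destruct Hm as [a1 a2]. destruct H as [b1 b2].
  apply Rle_antisym; [apply a2; exact b1 | apply b2; exact a1].
Qed.

Section Ctx.
Variable X : Type.
Variable d : X -> X -> R.
Variable U : X -> Prop.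
Variable f : X -> X.
Hypothesis Hmet : is_metric d.
Hypothesis Hcpt : seq_compact d.
Hypothesis Hf : open_dense_map d U f.
Hypothesis Hgood : good_iterates d U f.

Notation W := (GammaT d U f).

Lemma d_nonneg x y : 0 <= d x y.
Proof. destruct Hmet as [h _]. apply h. Qed.
Lemma d_refl x : d x x = 0.
Proof. destruct Hmet as [_ [h _]]. apply h. reflexivity. Qed.
Lemma d_sym x y : d x y = d y x.
Proof. destruct Hmet as [_ [_ [h _]]]. apply h. Qed.
Lemma d_tri x y z : d x z <= d x y + d y z.
Proof. destruct Hmet as [_ [_ [_ h]]]. apply h. Qed.
Lemma d_zero x y : (forall eps, 0 < eps -> d x y < eps) -> x = y.
Proof.
  intros H. destruct Hmet as [_ [h _]]. apply h.
  apply Rle_antisym; [|apply d_nonneg]. apply le_eps. intros e he. specialize (H e he). lra.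
Qed.

Lemma orb_Gamma y : Omega U f y -> Gamma d U f (fun n => Nat.iter n f y).
Proof.
  intros Hy N eps he. exists y. split; [exact Hy|]. intros n _. rewrite d_refl. exact he.
Qed.
Definition orb y (H : Omega U f y) : W := exist _ _ (orb_Gamma y H).

Lemma dense_ge (D : X -> Prop) g c : is_dense d D -> C0 d g ->
  (forall y, D y -> c <= g y) -> forall x, c <= g x.
Proof.
  intros HD Hg H x. apply le_eps. intros e he.
  destruct (Hg x e he) as [dl [hdl Hdl]].
  destruct (HD x dl hdl) as [y [Dy dy]].
  specialize (Hdl y dy). specialize (H y Dy). apply Rabs_def2 in Hdl. lra.
Qed.

Lemma dense_le (D : X -> Prop) g c : is_dense d D -> C0 d g ->
  (forall y, D y -> g y <= c) -> forall x, g x <= c.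
Proof.
  intros HD Hg H x. apply le_eps. intros e he.
  destruct (Hg x e he) as [dl [hdl Hdl]].
  destruct (HD x dl hdl) as [y [Dy dy]].
  specialize (Hdl y dy). specialize (H y Dy). apply Rabs_def2 in Hdl. lra.
Qed.

Definition ext_phi (w : nat -> X) : nat -> nat :=
  proj1_sig (constructive_indefinite_description _ (Hcpt w)).
Definition ext_l (w : nat -> X) : X :=
  proj1_sig (constructive_indefinite_description _
     (proj2_sig (constructive_indefinite_description _ (Hcpt w)))).
Lemma ext_spec w : (forall n, (ext_phi w n < ext_phi w (S n))%nat) /\
  forall eps, 0 < eps -> exists N, forall n, (N <= n)%nat -> d (w (ext_phi w n)) (ext_l w) < eps.
Proof.
  unfold ext_phi, ext_l.
  destruct (constructive_indefinite_description _ (Hcpt w)) as [phi Hphi]. simpl.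
  destruct (constructive_indefinite_description _ Hphi) as [l Hl]. simpl. exact Hl.
Qed.

Fixpoint Phi (v : nat -> nat -> X) (j : nat) : nat -> nat :=
  match j with
  | O => fun k => k
  | S j' => fun k => Phi v j' (ext_phi (fun k' => v (Phi v j' k') j') k)
  end.
Definition tlim (v : nat -> nat -> X) (j : nat) : X := ext_l (fun k' => v (Phi v j k') j).

Lemma Phi_incr v j : forall n, (Phi v j n < Phi v j (S n))%nat.
Proof.
  induction j; intro n; simpl; [lia|].
  apply (incr_strict _ IHj). pose proof (proj1 (ext_spec (fun k' => v (Phi v j k') j)) n). lia.
Qed.

Lemma Phi_factor v j k : exists rho : nat -> nat, (forall n, (n <= rho n)%nat) /\
  forall n, Phi v (S (j + k)) n = Phi v (S j) (rho n).
Proof.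
  induction k.
  - exists (fun n => n). split; [lia|]. intro n. rewrite Nat.add_0_r. reflexivity.
  - destruct IHk as [rho [h1 h2]].
    set (th := ext_phi (fun k' => v (Phi v (S (j + k)) k') (S (j + k)))).
    exists (fun n => rho (th n)). split.
    + intro n. pose proof (incr_ge _ (proj1 (ext_spec (fun k' => v (Phi v (S (j + k)) k') (S (j + k))))) n).
      specialize (h1 (th n)). unfold th in *. lia.
    + intro n. rewrite Nat.add_succ_r. change (Phi v (S (S (j + k))) n) with (Phi v (S (j + k)) (th n)).
      apply h2.
Qed.

Lemma Phi_conv v j : forall eps, 0 < eps -> exists K, forall n, (K <= n)%nat ->
  d (v (Phi v (S j) n) j) (tlim v j) < eps.
Proof.
  intros eps he. destruct (proj2 (ext_spec (fun k' => v (Phi v j k') j)) eps he) as [K HK].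
  exists K. intros n hn. apply (HK n hn).
Qed.

Lemma D_conv v j : forall eps, 0 < eps -> exists K, forall n, (K <= n)%nat ->
  d (v (Phi v (S n) n) j) (tlim v j) < eps.
Proof.
  intros eps he. destruct (Phi_conv v j eps he) as [K HK].
  exists (Nat.max K j). intros n hn.
  destruct (Phi_factor v j (n - j)) as [rho [h1 h2]].
  replace (S n) with (S (j + (n - j))) by lia. rewrite h2. apply HK.
  specialize (h1 n). lia.
Qed.

Lemma D_conv_fin v N : forall eps, 0 < eps -> exists K, forall n, (K <= n)%nat ->
  forall j, (j <= N)%nat -> d (v (Phi v (S n) n) j) (tlim v j) < eps.
Proof.
  intros eps he. induction N.
  - destruct (D_conv v 0 eps he) as [K HK]. exists K. intros n hn j hj.
    replace j with 0%nat by lia. apply HK; auto.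
  - destruct IHN as [K1 H1]. destruct (D_conv v (S N) eps he) as [K2 H2].
    exists (Nat.max K1 K2). intros n hn j hj.
    destruct (Nat.eq_dec j (S N)) as [->|hne]; [apply H2; lia|apply H1; lia].
Qed.

Lemma Gamma_bounded (psi : W -> R) : C0_Gamma d U f psi -> exists B, forall s, Rabs (psi s) <= B.
Proof.
  intros Hpsi. apply NNPP. intro Hnb.
  assert (Hk : forall k : nat, exists s : W, INR k < Rabs (psi s)).
  { intro k. apply NNPP. intro Hn. apply Hnb. exists (INR k). intro s.
    apply Rnot_lt_le. intro h. apply Hn. exists s. exact h. }
  set (u := fun k => proj1_sig (constructive_indefinite_description _ (Hk k))).
  assert (Hu : forall k, INR k < Rabs (psi (u k))).
  { intro k. unfold u. destruct (constructive_indefinite_description _ (Hk k)). simpl. auto. }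
  set (v := fun k => proj1_sig (u k)).
  set (t := tlim v).
  assert (Ht : Gamma d U f t).
  { intros N eps he. destruct (D_conv_fin v N (eps/2) ltac:(lra)) as [K HK].
    destruct (proj2_sig (u (Phi v (S K) K)) N (eps/2) ltac:(lra)) as [x [Hx Hd]].
    exists x. split; [exact Hx|]. intros n hn.
    specialize (HK K (le_n _) n hn). specialize (Hd n hn).
    pose proof (d_tri (t n) (v (Phi v (S K) K) n) (Nat.iter n f x)).
    rewrite d_sym in HK. change (proj1_sig (u (Phi v (S K) K)) n) with (v (Phi v (S K) K) n) in Hd.
    change (tlim v n) with (t n) in HK. lra. }
  set (T := exist _ t Ht : W).
  destruct (Hpsi T 1 ltac:(lra)) as [N [dl [hdl Hdl]]].
  destruct (D_conv_fin v N dl hdl) as [K HK].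
  destruct (archimed (Rabs (psi T) + 1)) as [ha _].
  set (k0 := Z.to_nat (up (Rabs (psi T) + 1))).
  set (n := Nat.max K k0).
  specialize (Hdl (u (Phi v (S n) n))).
  assert (Hc : Rabs (psi T - psi (u (Phi v (S n) n))) < 1).
  { apply Hdl. intros j hj. simpl. rewrite d_sym. apply (HK n); [unfold n; lia| exact hj]. }
  specialize (Hu (Phi v (S n) n)).
  assert (Hn1 : (n <= Phi v (S n) n)%nat) by (apply incr_ge; apply Phi_incr).
  assert (Hn2 : (k0 <= n)%nat) by (unfold n; lia).
  apply le_INR in Hn1. apply le_INR in Hn2.
  assert (Hk0 : Rabs (psi T) + 1 < INR k0).
  { unfold k0. rewrite INR_IZR_INZ. rewrite Z2Nat.id.
    - exact ha.
    - apply le_IZR. pose proof (Rabs_pos (psi T)). simpl. lra. }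
  pose proof (Rabs_triang_inv (psi (u (Phi v (S n) n))) (psi T)).
  rewrite Rabs_minus_sym in Hc. lra.
Qed.


Lemma C0G_comp_pi phi : C0 d phi -> C0_Gamma d U f (fun s => phi (pi_1 d U f s)).
Proof.
  intros Hphi s eps he. destruct (Hphi (proj1_sig s O) eps he) as [dl [hdl Hdl]].
  exists O, dl. split; [exact hdl|]. intros t Ht. apply Hdl. apply Ht. lia.
Qed.

Lemma C0G_const c : C0_Gamma d U f (fun _ => c).
Proof. intros s eps he. exists O, 1. split; [lra|]. intros. rewrite Rminus_diag, Rabs_R0. exact he. Qed.

Lemma C0G_add p q : C0_Gamma d U f p -> C0_Gamma d U f q -> C0_Gamma d U f (fun s => p s + q s).
Proof.
  intros Hp Hq s eps he.
  destruct (Hp s (eps/2) ltac:(lra)) as [N1 [d1 [hd1 H1]]].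
  destruct (Hq s (eps/2) ltac:(lra)) as [N2 [d2 [hd2 H2]]].
  exists (Nat.max N1 N2), (Rmin d1 d2). split; [apply Rmin_pos; auto|].
  intros t Ht.
  assert (a1 : Rabs (p s - p t) < eps/2).
  { apply H1. intros n hn. specialize (Ht n ltac:(lia)). pose proof (Rmin_l d1 d2). lra. }
  assert (a2 : Rabs (q s - q t) < eps/2).
  { apply H2. intros n hn. specialize (Ht n ltac:(lia)). pose proof (Rmin_r d1 d2). lra. }
  replace (p s + q s - (p t + q t)) with ((p s - p t) + (q s - q t)) by ring.
  pose proof (Rabs_triang (p s - p t) (q s - q t)). lra.
Qed.

Lemma C0G_scal c p : C0_Gamma d U f p -> C0_Gamma d U f (fun s => c * p s).
Proof.
  intros Hp s eps he.
  assert (hc : 0 < Rabs c + 1) by (pose proof (Rabs_pos c); lra).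
  destruct (Hp s (eps / (Rabs c + 1)) ltac:(apply Rdiv_lt_0_compat; lra)) as [N [dl [hdl H]]].
  exists N, dl. split; [exact hdl|]. intros t Ht. specialize (H t Ht).
  replace (c * p s - c * p t) with (c * (p s - p t)) by ring. rewrite Rabs_mult.
  assert (Rabs c * Rabs (p s - p t) <= Rabs c * (eps / (Rabs c + 1))).
  { apply Rmult_le_compat_l; [apply Rabs_pos|lra]. }
  assert (Rabs c * (eps / (Rabs c + 1)) < eps).
  { apply (Rmult_lt_reg_r (Rabs c + 1)); [lra|]. field_simplify; lra. }
  lra.
Qed.

Lemma C0G_shift p : C0_Gamma d U f p -> C0_Gamma d U f (fun s => p (sigma_f d U f s)).
Proof.
  intros Hp s eps he. destruct (Hp (sigma_f d U f s) eps he) as [N [dl [hdl H]]].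
  exists (S N), dl. split; [exact hdl|]. intros t Ht. apply H. intros n hn. simpl. apply Ht. lia.
Qed.

Lemma C0_const c : C0 d (fun _ => c).
Proof. intros x eps he. exists 1. split; [lra|]. intros. rewrite Rminus_diag, Rabs_R0. exact he. Qed.

Lemma C0_add p q : C0 d p -> C0 d q -> C0 d (fun s => p s + q s).
Proof.
  intros Hp Hq s eps he.
  destruct (Hp s (eps/2) ltac:(lra)) as [d1 [hd1 H1]].
  destruct (Hq s (eps/2) ltac:(lra)) as [d2 [hd2 H2]].
  exists (Rmin d1 d2). split; [apply Rmin_pos; auto|].
  intros t Ht.
  assert (a1 : Rabs (p s - p t) < eps/2).
  { apply H1. pose proof (Rmin_l d1 d2). lra. }
  assert (a2 : Rabs (q s - q t) < eps/2).
  { apply H2. pose proof (Rmin_r d1 d2). lra. }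
  replace (p s + q s - (p t + q t)) with ((p s - p t) + (q s - q t)) by ring.
  pose proof (Rabs_triang (p s - p t) (q s - q t)). lra.
Qed.

Lemma C0_scal c p : C0 d p -> C0 d (fun s => c * p s).
Proof.
  intros Hp s eps he.
  assert (hc : 0 < Rabs c + 1) by (pose proof (Rabs_pos c); lra).
  destruct (Hp s (eps / (Rabs c + 1)) ltac:(apply Rdiv_lt_0_compat; lra)) as [dl [hdl H]].
  exists dl. split; [exact hdl|]. intros t Ht. specialize (H t Ht).
  replace (c * p s - c * p t) with (c * (p s - p t)) by ring. rewrite Rabs_mult.
  assert (Rabs c * Rabs (p s - p t) <= Rabs c * (eps / (Rabs c + 1))).
  { apply Rmult_le_compat_l; [apply Rabs_pos|lra]. }
  assert (Rabs c * (eps / (Rabs c + 1)) < eps).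
  { apply (Rmult_lt_reg_r (Rabs c + 1)); [lra|]. field_simplify; lra. }
  lra.
Qed.

Lemma X_bounded phi : C0 d phi -> exists B, forall x, Rabs (phi x) <= B.
Proof.
  intros Hphi. destruct (Gamma_bounded _ (C0G_comp_pi phi Hphi)) as [B HB].
  exists B. intro x. apply Rabs_le. destruct Hgood as [Hden _]. split.
  - apply (dense_ge (Omega U f)); auto. intros y Hy. specialize (HB (orb y Hy)).
    apply Rabs_def2b in HB. unfold pi_1, orb in HB. simpl in HB. destruct HB; lra.
  - apply (dense_le (Omega U f)); auto. intros y Hy. specialize (HB (orb y Hy)).
    apply Rabs_def2b in HB. unfold pi_1, orb in HB. simpl in HB. destruct HB; lra.
Qed.

Lemma KL phi psi : C0 d phi -> dominates_E d U f phi psi ->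
  forall s, Gamma d U f s -> phi (s 1%nat) <= psi (s O).
Proof.
  intros Hphi Hdom s Hs. destruct (Hdom (s O)) as [HU HnU].
  destruct (classic (U (s O))) as [hU|hU].
  - assert (E : s 1%nat = f (s O)).
    { apply d_zero. intros eps he. destruct Hf as [_ [_ Hc]].
      destruct (Hc (s O) hU (eps/2) ltac:(lra)) as [dl [hdl Hdl]].
      destruct (Hs 1%nat (Rmin dl (eps/2)) ltac:(apply Rmin_pos; lra)) as [x [[Ux _] Hx]].
      pose proof (Hx O ltac:(lia)) as h0. pose proof (Hx 1%nat ltac:(lia)) as h1. simpl in h0, h1.
      pose proof (Rmin_l dl (eps/2)). pose proof (Rmin_r dl (eps/2)).
      specialize (Hdl x Ux ltac:(lra)).
      pose proof (d_tri (s 1%nat) (f x) (f (s O))). rewrite (d_sym (f x) (f (s O))) in H1. lra. }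
    rewrite E. apply HU; auto.
  - apply le_eps. intros eps he.
    destruct (HnU hU (eps/2) ltac:(lra)) as [dl [hdl Hdl]].
    destruct (Hphi (s 1%nat) (eps/2) ltac:(lra)) as [d2 [hd2 Hd2]].
    destruct (Hs 1%nat (Rmin dl d2) ltac:(apply Rmin_pos; lra)) as [x [[Ux _] Hx]].
    pose proof (Hx O ltac:(lia)) as h0. pose proof (Hx 1%nat ltac:(lia)) as h1. simpl in h0, h1.
    pose proof (Rmin_l dl d2). pose proof (Rmin_r dl d2).
    specialize (Hdl x Ux ltac:(lra)). specialize (Hd2 (f x) ltac:(lra)).
    apply Rabs_def2 in Hd2. lra.
Qed.

Lemma dom_const phi B : (forall x, Rabs (phi x) <= B) -> dominates_E d U f phi (fun _ => B).
Proof.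
  intros HB x. split.
  - intros _. specialize (HB (f x)). apply Rabs_def2b in HB. destruct HB; lra.
  - intros _ eps he. exists 1. split; [lra|]. intros y _ _. specialize (HB (f y)).
    apply Rabs_def2b in HB. destruct HB; lra.
Qed.

Lemma part1 (muh : (W -> R) -> R) :
  is_SMplus (C0_Gamma d U f) muh ->
  SM_eq (C0_Gamma d U f) (push (sigma_f d U f) muh) muh ->
  SM_le (C0 d) (push (pi_1 d U f) muh) (pushf d U f (push (pi_1 d U f) muh)).
Proof.
  intros [_ [_ [_ Hmono]]] Hinv phi Hphi. unfold pushf.
  destruct (X_bounded phi Hphi) as [B HB].
  apply le_Rinf.
  - exists (push (pi_1 d U f) muh (fun _ => B)). exists (fun _ => B).
    split; [apply C0_const|split; [apply dom_const; auto|reflexivity]].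
  - intros r [psi [Hpsi [Hdom ->]]]. unfold push.
    rewrite <- (Hinv _ (C0G_comp_pi phi Hphi)). unfold push.
    apply Hmono.
    + apply (C0G_shift _ (C0G_comp_pi phi Hphi)).
    + apply (C0G_comp_pi psi Hpsi).
    + intro s. unfold pi_1, sigma_f. simpl. apply (KL phi psi Hphi Hdom). apply (proj2_sig s).
Qed.


Fixpoint Sp (N : nat) : W -> W :=
  match N with
  | O => sigma_f d U f
  | S N' => fun s => Sp N' (Sp N' s)
  end.

Fixpoint A (N : nat) (psi : W -> R) : W -> R :=
  match N with
  | O => psi
  | S N' => fun s => (A N' psi s + A N' psi (Sp N' s)) / 2
  end.

Lemma Sp_comm N s : Sp N (sigma_f d U f s) = sigma_f d U f (Sp N s).
Proof. revert s. induction N; intro s; simpl; [reflexivity|]. rewrite IHN, IHN. reflexivity. Qed.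

Lemma A_add N p q s : A N (fun s => p s + q s) s = A N p s + A N q s.
Proof. revert s. induction N; intro s; simpl; [reflexivity|]. rewrite IHN, IHN. field. Qed.

Lemma A_scal N c p s : A N (fun s => c * p s) s = c * A N p s.
Proof. revert s. induction N; intro s; simpl; [reflexivity|]. rewrite IHN, IHN. field. Qed.

Lemma A_const N c s : A N (fun _ => c) s = c.
Proof. revert s. induction N; intro s; simpl; [reflexivity|]. rewrite IHN, IHN. field. Qed.

Lemma A_le N p B : (forall s, p s <= B) -> forall s, A N p s <= B.
Proof.
  intros H. induction N; intro s; simpl; [auto|].
  pose proof (IHN s). pose proof (IHN (Sp N s)). lra.
Qed.

Lemma A_ge N p B : (forall s, B <= p s) -> forall s, B <= A N p s.
Proof.
  intros H. induction N; intro s; simpl; [auto|].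
  pose proof (IHN s). pose proof (IHN (Sp N s)). lra.
Qed.

Lemma A_shift N p s : A N (fun s => p (sigma_f d U f s)) s = A N p (sigma_f d U f s).
Proof. revert s. induction N; intro s; simpl; [reflexivity|]. rewrite IHN, IHN, Sp_comm. reflexivity. Qed.

Lemma A_tele N p s : A N p (sigma_f d U f s) - A N p s = (p (Sp N s) - p s) / 2 ^ N.
Proof.
  revert s. induction N; intro s; simpl.
  - field.
  - rewrite Sp_comm.
    assert (h1 := IHN s). assert (h2 := IHN (Sp N s)).
    assert (hp : 0 < 2 ^ N) by (apply pow_lt; lra).
    replace ((A N p (sigma_f d U f s) + A N p (sigma_f d U f (Sp N s))) / 2 -
             (A N p s + A N p (Sp N s)) / 2)
      with (((A N p (sigma_f d U f s) - A N p s) + (A N p (sigma_f d U f (Sp N s)) - A N p (Sp N s))) / 2)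
      by field.
    rewrite h1, h2. field. lra.
Qed.

Section Mu.
Variable mu0 : (X -> R) -> R.
Hypothesis Hsm : is_SMplus (C0 d) mu0.
Hypothesis Hinv : SM_eq (C0 d) (pushf d U f mu0) mu0.

Lemma mu_add p q : C0 d p -> C0 d q -> mu0 (fun w => p w + q w) <= mu0 p + mu0 q.
Proof. destruct Hsm as [h _]. apply h. Qed.
Lemma mu_hom c p : 0 <= c -> C0 d p -> mu0 (fun w => c * p w) = c * mu0 p.
Proof. destruct Hsm as [_ [h _]]. apply h. Qed.
Lemma mu_mono p q : C0 d p -> C0 d q -> (forall w, p w <= q w) -> mu0 p <= mu0 q.
Proof. destruct Hsm as [_ [_ [_ h]]]. apply h. Qed.

Definition m0 := mu0 (fun _ => 1).

Lemma mu_const_pos c : 0 <= c -> mu0 (fun _ => c) = c * m0.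
Proof.
  intros hc. unfold m0. rewrite <- (mu_hom c (fun _ => 1) hc (C0_const 1)).
  f_equal. apply functional_extensionality. intro. ring.
Qed.

Lemma mu_const_ge c : c * m0 <= mu0 (fun _ => c).
Proof.
  destruct (Rle_or_lt 0 c) as [hc|hc]; [rewrite mu_const_pos; lra|].
  assert (E : (fun _ : X => c) = (fun w => (- c) * (fun _ => -1) w)).
  { apply functional_extensionality. intro. ring. }
  rewrite E, mu_hom; [|lra|apply C0_const].
  pose proof (mu_add (fun _ => 1) (fun _ => -1) (C0_const _) (C0_const _)) as h.
  cbv beta in h.
  replace (fun _ : X => 1 + -1) with (fun _ : X => 0) in h by (apply functional_extensionality; intro; ring).
  rewrite mu_const_pos in h; [|lra]. fold m0 in h.
  assert (- c * (- m0) <= - c * mu0 (fun _ => -1)) by (apply Rmult_le_compat_l; lra).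
  lra.
Qed.

Lemma m0_nonneg : 0 <= m0.
Proof.
  pose proof (mu_const_ge (-1)).
  pose proof (mu_mono (fun _ => -1) (fun _ => 1) (C0_const _) (C0_const _) ltac:(intro; lra)).
  unfold m0 in *. lra.
Qed.

Lemma step_sigma g eps : C0 d g -> 0 < eps -> exists h, C0 d h /\ mu0 h <= mu0 g + eps /\
  forall s : W, g (pi_1 d U f (sigma_f d U f s)) <= h (pi_1 d U f s).
Proof.
  intros Hg he. pose proof (Hinv g Hg) as E. unfold pushf in E.
  destruct (X_bounded g Hg) as [B HB].
  set (S := fun r => exists psi, C0 d psi /\ dominates_E d U f g psi /\ r = mu0 psi).
  assert (Hne : exists r, S r).
  { exists (mu0 (fun _ => B)). exists (fun _ => B). split; [apply C0_const|split; [apply dom_const; auto|reflexivity]]. }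
  assert (Hlb : is_lower_bound S (mu0 (fun _ => - B))).
  { intros r [psi [Hpsi [Hdom ->]]]. apply mu_mono; [apply C0_const|auto|].
    destruct Hf as [_ [HUd _]]. apply (dense_ge U); auto.
    intros y Uy. destruct (Hdom y) as [h _]. specialize (h Uy). specialize (HB (f y)).
    apply Rabs_def2b in HB. destruct HB. lra. }
  destruct (Rinf_approx S _ eps Hne Hlb he) as [r [[psi [Hpsi [Hdom ->]]] Hr]].
  exists psi. split; [auto|split].
  - fold S in E. rewrite E in Hr. lra.
  - intro s. unfold pi_1, sigma_f. simpl. apply (KL g psi Hg Hdom). apply (proj2_sig s).
Qed.

Definition goodT (T : W -> W) := forall g eps, C0 d g -> 0 < eps -> exists h, C0 d h /\
  mu0 h <= mu0 g + eps /\ forall s, g (pi_1 d U f (T s)) <= h (pi_1 d U f s).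

Lemma goodT_comp T1 T2 : goodT T1 -> goodT T2 -> goodT (fun s => T1 (T2 s)).
Proof.
  intros H1 H2 g eps Hg he.
  destruct (H1 g (eps/2) Hg ltac:(lra)) as [h1 [Hh1 [a1 b1]]].
  destruct (H2 h1 (eps/2) Hh1 ltac:(lra)) as [h2 [Hh2 [a2 b2]]].
  exists h2. split; [auto|split; [lra|]]. intro s. eapply Rle_trans; [apply b1|apply b2].
Qed.

Lemma goodT_Sp N : goodT (Sp N).
Proof.
  induction N; simpl.
  - intros g eps Hg he. apply step_sigma; auto.
  - apply goodT_comp; auto.
Qed.

Definition Sset (psi : W -> R) (r : R) : Prop :=
  exists N g, C0 d g /\ (forall s, A N psi s <= g (pi_1 d U f s)) /\ r = mu0 g.
Definition pp (psi : W -> R) : R := Rinf (Sset psi).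
Definition VV (psi : W -> R) : Prop := exists B, forall s, Rabs (psi s) <= B.

Lemma Sset_ne psi : VV psi -> exists r, Sset psi r.
Proof.
  intros [B HB]. exists (mu0 (fun _ => B)). exists O, (fun _ => B).
  split; [apply C0_const|split; [|reflexivity]]. intro s. simpl. specialize (HB s).
  apply Rabs_def2b in HB. lra.
Qed.

Lemma Sset_lb psi c : (forall s, c <= psi s) -> is_lower_bound (Sset psi) (mu0 (fun _ => c)).
Proof.
  intros H r [N [g [Hg [Hle ->]]]]. apply mu_mono; [apply C0_const|auto|].
  destruct Hgood as [Hden _]. apply (dense_ge (Omega U f)); auto.
  intros y Hy. specialize (Hle (orb y Hy)). pose proof (A_ge N psi c H (orb y Hy)).
  change (pi_1 d U f (orb y Hy)) with y in Hle. lra.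
Qed.

Lemma VV_lb psi : VV psi -> exists c, forall s, c <= psi s.
Proof. intros [B HB]. exists (- B). intro s. specialize (HB s). apply Rabs_def2b in HB. lra. Qed.

Lemma pp_le psi r : VV psi -> Sset psi r -> pp psi <= r.
Proof.
  intros HV Hr. destruct (VV_lb psi HV) as [c Hc].
  apply (Rinf_le _ _ _ (Sset_lb psi c Hc) Hr).
Qed.

Lemma pp_ge psi a : VV psi -> (forall r, Sset psi r -> a <= r) -> a <= pp psi.
Proof. intros HV H. apply le_Rinf; [apply Sset_ne; auto|exact H]. Qed.

Lemma pp_approx psi eps : VV psi -> 0 < eps -> exists N g, C0 d g /\
  (forall s, A N psi s <= g (pi_1 d U f s)) /\ mu0 g < pp psi + eps.
Proof.
  intros HV he. destruct (VV_lb psi HV) as [c Hc].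
  destruct (Rinf_approx _ _ eps (Sset_ne psi HV) (Sset_lb psi c Hc) he) as [r [[N [g [Hg [Hle ->]]]] Hr]].
  exists N, g. auto.
Qed.

Lemma VV_const c : VV (fun _ => c).
Proof. exists (Rabs c). intro. lra. Qed.
Lemma VV_add p q : VV p -> VV q -> VV (fun s => p s + q s).
Proof.
  intros [B1 H1] [B2 H2]. exists (B1 + B2). intro s.
  pose proof (Rabs_triang (p s) (q s)). specialize (H1 s). specialize (H2 s). lra.
Qed.
Lemma VV_scal c p : VV p -> VV (fun s => c * p s).
Proof.
  intros [B H]. exists (Rabs c * B). intro s. rewrite Rabs_mult.
  apply Rmult_le_compat_l; [apply Rabs_pos|auto].
Qed.
Lemma VV_C0G p : C0_Gamma d U f p -> VV p.
Proof. apply Gamma_bounded. Qed.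

Lemma Sset_up N psi g : C0 d g -> (forall s, A N psi s <= g (pi_1 d U f s)) ->
  forall k eps, 0 < eps -> exists g', C0 d g' /\ mu0 g' <= mu0 g + eps /\
    forall s, A (k + N) psi s <= g' (pi_1 d U f s).
Proof.
  intros Hg Hle k. induction k; intros eps he.
  - exists g. split; [auto|split; [lra|auto]].
  - destruct (IHk (eps/2) ltac:(lra)) as [g1 [Hg1 [a1 b1]]].
    destruct (goodT_Sp (k + N) g1 (eps/2) Hg1 ltac:(lra)) as [h [Hh [a2 b2]]].
    exists (fun x => / 2 * (fun x => g1 x + h x) x).
    split; [apply C0_scal; apply C0_add; auto|split].
    + rewrite mu_hom; [|lra|apply C0_add; auto].
      pose proof (mu_add g1 h Hg1 Hh). lra.
    + intro s. simpl. pose proof (b1 s) as b0. pose proof (b1 (Sp (k + N) s)) as b3.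
      specialize (b2 s). lra.
Qed.

Lemma pp_add p q : VV p -> VV q -> pp (fun s => p s + q s) <= pp p + pp q.
Proof.
  intros Hp Hq. apply le_eps. intros eps he.
  destruct (pp_approx p (eps/4) Hp ltac:(lra)) as [N1 [g1 [Hg1 [Hl1 Hm1]]]].
  destruct (pp_approx q (eps/4) Hq ltac:(lra)) as [N2 [g2 [Hg2 [Hl2 Hm2]]]].
  destruct (Sset_up N1 p g1 Hg1 Hl1 N2 (eps/4) ltac:(lra)) as [g1' [Hg1' [a1 b1]]].
  destruct (Sset_up N2 q g2 Hg2 Hl2 N1 (eps/4) ltac:(lra)) as [g2' [Hg2' [a2 b2]]].
  rewrite Nat.add_comm in b2.
  assert (Hr : Sset (fun s => p s + q s) (mu0 (fun x => g1' x + g2' x))).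
  { exists (N2 + N1)%nat, (fun x => g1' x + g2' x). split; [apply C0_add; auto|split; [|reflexivity]].
    intro s. rewrite A_add. specialize (b1 s). specialize (b2 s). lra. }
  pose proof (pp_le _ _ (VV_add p q Hp Hq) Hr).
  pose proof (mu_add g1' g2' Hg1' Hg2'). lra.
Qed.

Lemma pp_hom c p : 0 < c -> VV p -> pp (fun s => c * p s) = c * pp p.
Proof.
  intros hc Hp. assert (Hcp : VV (fun s => c * p s)) by (apply VV_scal; auto).
  apply Rle_antisym.
  - assert (pp (fun s => c * p s) / c <= pp p).
    { apply pp_ge; auto. intros r [N [g [Hg [Hle ->]]]].
      assert (Sset (fun s => c * p s) (mu0 (fun x => c * g x))).
      { exists N, (fun x => c * g x). split; [apply C0_scal; auto|split; [|reflexivity]].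
        intro s. rewrite A_scal. apply Rmult_le_compat_l; [lra|auto]. }
      pose proof (pp_le _ _ Hcp H). rewrite mu_hom in H0; [|lra|auto].
      apply (Rmult_le_reg_r c); [lra|]. field_simplify; lra. }
    apply (Rmult_le_compat_l c) in H; [|lra]. field_simplify in H; lra.
  - apply pp_ge; auto. intros r [N [g [Hg [Hle ->]]]].
    assert (Sset p (mu0 (fun x => / c * g x))).
    { exists N, (fun x => / c * g x). split; [apply C0_scal; auto|split; [|reflexivity]].
      intro s. specialize (Hle s). rewrite A_scal in Hle.
      apply (Rmult_le_reg_l c); [lra|]. field_simplify; [|lra]. lra. }
    pose proof (pp_le _ _ Hp H). rewrite mu_hom in H0; [|apply Rlt_le; apply Rinv_0_lt_compat; lra|auto].
    apply (Rmult_le_compat_l c) in H0; [|lra]. field_simplify in H0; [|lra]. lra.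
Qed.

Lemma pp_const c : c * m0 <= pp (fun _ => c).
Proof.
  apply pp_ge; [apply VV_const|]. intros r [N [g [Hg [Hle ->]]]].
  eapply Rle_trans; [apply mu_const_ge|]. apply mu_mono; [apply C0_const|auto|].
  destruct Hgood as [Hden _]. apply (dense_ge (Omega U f)); auto.
  intros y Hy. specialize (Hle (orb y Hy)). rewrite A_const in Hle.
  change (pi_1 d U f (orb y Hy)) with y in Hle. lra.
Qed.

Lemma pp_elem N p g : VV p -> C0 d g -> (forall s, A N p s <= g (pi_1 d U f s)) -> pp p <= mu0 g.
Proof. intros Hp Hg H. apply pp_le; auto. exists N, g. auto. Qed.

Lemma pp_bound p M : VV p -> 0 <= M -> (forall s, p s <= M) -> pp p <= M * m0.
Proof.
  intros Hp hM H. rewrite <- mu_const_pos; auto. apply (pp_elem O); auto. apply C0_const.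
Qed.

Lemma pp_pi phi : C0 d phi -> pp (fun s => phi (pi_1 d U f s)) <= mu0 phi.
Proof.
  intros Hphi. apply (pp_elem O); auto.
  - apply VV_C0G. apply C0G_comp_pi; auto.
  - intros s. simpl. lra.
Qed.

Lemma pp_small p : VV p -> (forall eps, 0 < eps -> exists N, forall s, A N p s <= eps) -> pp p <= 0.
Proof.
  intros Hp H. apply le_eps. intros eps he.
  assert (hm : 0 < m0 + 1) by (pose proof m0_nonneg; lra).
  destruct (H (eps / (m0 + 1)) ltac:(apply Rdiv_lt_0_compat; lra)) as [N HN].
  assert (pp p <= eps / (m0 + 1) * m0).
  { rewrite <- mu_const_pos; [|apply Rlt_le; apply Rdiv_lt_0_compat; lra].
    apply (pp_elem N); auto. apply C0_const. }
  assert (eps / (m0 + 1) * m0 <= eps).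
  { apply (Rmult_le_reg_r (m0 + 1)); [lra|]. field_simplify; [|lra]. pose proof m0_nonneg. nra. }
  lra.
Qed.

Lemma tele_small p B : (forall s, Rabs (p s) <= B) ->
  forall eps, 0 < eps -> exists N, forall s, (p (Sp N s) - p s) / 2 ^ N <= eps.
Proof.
  intros HB eps he.
  destruct (Pow_x_infinity 2 ltac:(rewrite Rabs_pos_eq; lra) (2 * Rabs B / eps + 1)) as [N HN].
  exists N. intros s. specialize (HN N (le_n _)).
  assert (hp : 0 < 2 ^ N) by (apply pow_lt; lra).
  rewrite Rabs_pos_eq in HN; [|lra].
  pose proof (HB s) as h1. pose proof (HB (Sp N s)) as h2.
  apply Rabs_def2b in h1. apply Rabs_def2b in h2.
  assert (hB : B <= Rabs B) by apply Rle_abs.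
  assert (2 * Rabs B <= eps * 2 ^ N).
  { assert (2 * Rabs B / eps <= 2 ^ N) by lra.
    apply (Rmult_le_compat_l eps) in H; [|lra]. field_simplify in H; lra. }
  apply (Rmult_le_reg_r (2 ^ N)); [lra|]. field_simplify; lra.
Qed.

Lemma pp_shift1 p : VV p -> pp (fun s => p (sigma_f d U f s) + (-1) * p s) <= 0.
Proof.
  intros Hp. destruct Hp as [B HB].
  apply pp_small.
  - apply VV_add; [exists B; intro s; apply HB|apply VV_scal; exists B; auto].
  - intros eps he. destruct (tele_small p B HB eps he) as [N HN]. exists N. intro s.
    rewrite A_add, A_scal, A_shift. specialize (HN s). rewrite <- A_tele in HN. lra.
Qed.

Lemma pp_shift2 p : VV p -> pp (fun s => p s + (-1) * p (sigma_f d U f s)) <= 0.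
Proof.
  intros Hp. destruct Hp as [B HB].
  set (q := fun s => - p s).
  assert (HBq : forall s, Rabs (q s) <= B) by (intro s; unfold q; rewrite Rabs_Ropp; auto).
  apply pp_small.
  - apply VV_add; [exists B; intro s; apply HB|apply VV_scal; exists B; intro; apply HB].
  - intros eps he. destruct (tele_small q B HBq eps he) as [N HN]. exists N. intro s.
    rewrite A_add, A_scal, A_shift. specialize (HN s). rewrite <- A_tele in HN.
    unfold q in HN.
    assert (E : forall t, A N (fun s => - p s) t = -1 * A N p t).
    { intro t. rewrite <- A_scal. f_equal. apply functional_extensionality. intro. ring. }
    rewrite !E in HN. lra.
Qed.


Lemma SMnorm_eq {T : Type} (C : (T -> R) -> Prop) (mu : (T -> R) -> R) K :
  0 <= K -> (forall phi M, C phi -> (forall w, Rabs (phi w) <= M) -> Rabs (mu phi) <= K * M) ->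
  (forall K', 0 <= K' -> (forall phi M, C phi -> (forall w, Rabs (phi w) <= M) -> Rabs (mu phi) <= K' * M) -> K <= K') ->
  SMnorm C mu = K.
Proof.
  intros h0 h1 h2. unfold SMnorm. apply Rinf_eq. split.
  - intros r [a b]. apply h2; auto.
  - intros m' hm'. apply hm'. split; auto.
Qed.

Lemma X_inh : SM_nonzero (C0 d) mu0 -> exists x : X, True.
Proof.
  intros [phi [Hphi Hnz]]. apply NNPP; intro hn. apply Hnz.
  assert (E : phi = fun w => 0 * phi w).
  { apply functional_extensionality. intro x. exfalso. apply hn. eauto. }
  rewrite E, mu_hom; [ring|lra|auto].
Qed.

Lemma W_inh : SM_nonzero (C0 d) mu0 -> exists w : W, True.
Proof.
  intros Hnz. destruct (X_inh Hnz) as [x0 _]. destruct Hgood as [Hden _].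
  destruct (Hden x0 1 ltac:(lra)) as [y0 [Hy0 _]]. exists (orb y0 Hy0). auto.
Qed.

Lemma m0_pos : SM_nonzero (C0 d) mu0 -> 0 < m0.
Proof.
  intros Hnz. destruct (X_inh Hnz) as [x0 _]. destruct Hnz as [phi [Hphi Hnz]].
  destruct (X_bounded phi Hphi) as [B HB].
  assert (hB : 0 <= B) by (specialize (HB x0); pose proof (Rabs_pos (phi x0)); lra).
  pose proof m0_nonneg as h. destruct (Rle_lt_or_eq_dec 0 m0 h) as [h'|h']; auto. exfalso. apply Hnz.
  apply Rle_antisym.
  - eapply Rle_trans; [apply (mu_mono phi (fun _ => B)); auto; [apply C0_const|]|].
    + intro w. specialize (HB w). apply Rabs_def2b in HB. lra.
    + rewrite mu_const_pos; auto. rewrite <- h'. lra.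
  - eapply Rle_trans; [|apply (mu_mono (fun _ => - B) phi); auto; [apply C0_const|]].
    + pose proof (mu_const_ge (- B)). rewrite <- h' in H. lra.
    + intro w. specialize (HB w). apply Rabs_def2b in HB. lra.
Qed.

Lemma mu0_bound phi M : (exists x : X, True) -> C0 d phi -> (forall w, Rabs (phi w) <= M) ->
  Rabs (mu0 phi) <= m0 * M.
Proof.
  intros [x0 _] Hphi HM.
  assert (hM : 0 <= M) by (specialize (HM x0); pose proof (Rabs_pos (phi x0)); lra).
  apply Rabs_le. split.
  - pose proof (mu_const_ge (- M)).
    pose proof (mu_mono (fun _ => - M) phi (C0_const _) Hphi ltac:(intro w; specialize (HM w); apply Rabs_def2b in HM; lra)).
    lra.
  - pose proof (mu_const_pos M hM).
    pose proof (mu_mono phi (fun _ => M) Hphi (C0_const _) ltac:(intro w; specialize (HM w); apply Rabs_def2b in HM; lra)).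
    lra.
Qed.

Lemma mu0_norm : SM_nonzero (C0 d) mu0 -> SMnorm (C0 d) mu0 = m0.
Proof.
  intros Hnz. apply SMnorm_eq.
  - apply m0_nonneg.
  - intros phi M Hphi HM. apply mu0_bound; auto. apply X_inh; auto.
  - intros K' hK' H. specialize (H (fun _ => 1) 1 (C0_const 1) ltac:(intro; cbv beta; rewrite Rabs_R1; lra)).
    fold m0 in H. rewrite Rabs_pos_eq in H; [lra|apply m0_nonneg].
Qed.

Lemma part2a : SM_nonzero (C0 d) mu0 ->
  exists muh0 : (W -> R) -> R,
        is_SMplus (C0_Gamma d U f) muh0 /\ is_linear_fn (C0_Gamma d U f) muh0 /\
        SM_nonzero (C0_Gamma d U f) muh0 /\
        SM_eq (C0_Gamma d U f) (push (sigma_f d U f) muh0) muh0 /\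
        SMnorm (C0_Gamma d U f) muh0 = SMnorm (C0 d) mu0 /\
        SM_le (C0 d) (push (pi_1 d U f) muh0) mu0.
Proof.
  intros Hnz. destruct (W_inh Hnz) as [w0 _]. pose proof (m0_pos Hnz) as hm.
  destruct (hahn_banach W w0 VV pp m0 VV_const VV_add VV_scal pp_add pp_hom pp_const)
    as [L [LA [LS [Lp L1]]]].
  assert (Lsub : forall a b, VV a -> VV b -> L (fun s => a s + -1 * b s) = L a - L b).
  { intros a b Ha Hb. pose proof (LA a (fun s => -1 * b s) Ha (VV_scal _ _ Hb)) as e.
    simpl in e. rewrite e, LS; auto. ring. }
  assert (Lbound : forall psi M, C0_Gamma d U f psi -> (forall w, Rabs (psi w) <= M) ->
            Rabs (L psi) <= m0 * M).
  { intros psi M Hpsi HM.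
    assert (hM : 0 <= M) by (specialize (HM w0); pose proof (Rabs_pos (psi w0)); lra).
    pose proof (VV_C0G _ Hpsi) as Vp.
    apply Rabs_le. split.
    - pose proof (Lp _ (VV_scal (-1) _ Vp)) as h1. rewrite LS in h1; auto.
      assert (pp (fun w => -1 * psi w) <= M * m0).
      { apply pp_bound; auto. apply VV_scal; auto. intro s. specialize (HM s). apply Rabs_def2b in HM. lra. }
      lra.
    - pose proof (Lp _ Vp) as h1.
      assert (pp psi <= M * m0).
      { apply pp_bound; auto. intro s. specialize (HM s). apply Rabs_def2b in HM. lra. }
      lra. }
  exists L. split; [|split; [|split; [|split; [|split]]]].
  - split; [|split; [|split]].
    + intros a b Ha Hb. rewrite LA; [lra|apply VV_C0G; auto|apply VV_C0G; auto].
    + intros c a _ Ha. apply LS. apply VV_C0G; auto.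
    + exists m0. intros a M Ha HM. apply Lbound; auto.
    + intros a b Ha Hb Hab. pose proof (VV_C0G _ Ha) as Va. pose proof (VV_C0G _ Hb) as Vb.
      pose proof (Lp _ (VV_add _ _ Va (VV_scal (-1) _ Vb))) as h. cbv beta in h. rewrite Lsub in h; auto.
      assert (pp (fun s => a s + -1 * b s) <= 0 * m0).
      { apply pp_bound; [apply VV_add; auto; apply VV_scal; auto|lra|]. intro s. specialize (Hab s). lra. }
      lra.
  - split.
    + intros a b Ha Hb. apply LA; apply VV_C0G; auto.
    + intros c a Ha. apply LS. apply VV_C0G; auto.
  - exists (fun _ => 1). split; [apply C0G_const|]. rewrite L1. lra.
  - intros psi Hpsi. unfold push. pose proof (VV_C0G _ Hpsi) as Vp.
    pose proof (VV_C0G _ (C0G_shift _ Hpsi)) as Vs.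
    pose proof (Lp _ (VV_add _ _ Vs (VV_scal (-1) _ Vp))) as h1. cbv beta in h1. rewrite Lsub in h1; auto.
    pose proof (pp_shift1 psi Vp).
    pose proof (Lp _ (VV_add _ _ Vp (VV_scal (-1) _ Vs))) as h2. cbv beta in h2. rewrite Lsub in h2; auto.
    pose proof (pp_shift2 psi Vp). lra.
  - rewrite mu0_norm; auto. apply SMnorm_eq.
    + lra.
    + intros; apply Lbound; auto.
    + intros K' hK' H. specialize (H (fun _ => 1) 1 (C0G_const 1) ltac:(intro; cbv beta; rewrite Rabs_R1; lra)).
      rewrite L1, Rabs_pos_eq in H; lra.
  - intros phi Hphi. unfold push.
    pose proof (Lp _ (VV_C0G _ (C0G_comp_pi phi Hphi))). pose proof (pp_pi phi Hphi). lra.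
Qed.

Definition Sm (muh : (W -> R) -> R) : Prop :=
  is_SMplus (C0_Gamma d U f) muh /\
  SM_le (C0 d) (push (pi_1 d U f) muh) mu0 /\
  SM_eq (C0_Gamma d U f) (push (sigma_f d U f) muh) muh.

Lemma Sm_zero muh : Sm muh -> muh (fun _ => 0) = 0.
Proof.
  intros [[_ [Hh _]] _].
  assert (E : (fun _ : W => 0) = (fun w => 0 * (fun _ : W => 0) w)) by (apply functional_extensionality; intro; ring).
  rewrite E, Hh; [ring|lra|apply C0G_const].
Qed.

Lemma Sm_bound muh psi M : Sm muh -> C0_Gamma d U f psi -> (forall w, Rabs (psi w) <= M) -> 0 <= M ->
  - (M * m0) <= muh psi /\ muh psi <= M * m0.
Proof.
  intros Hm Hpsi HM hM. pose proof Hm as [[Ha [Hh [_ Hmo]]] [Hle _]].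
  assert (up : forall q, C0_Gamma d U f q -> (forall w, Rabs (q w) <= M) -> muh q <= M * m0).
  { intros q Hq HMq.
    pose proof (Hmo q (fun _ => M) Hq (C0G_const M) ltac:(intro w; specialize (HMq w); apply Rabs_def2b in HMq; lra)).
    pose proof (Hh M (fun _ => 1) hM (C0G_const 1)) as e.
    cbv beta in e. replace (fun _ : W => M * 1) with (fun _ : W => M) in e by (apply functional_extensionality; intro; ring).
    pose proof (Hle (fun _ => 1) (C0_const 1)) as h1. unfold push in h1. fold m0 in h1.
    assert (M * muh (fun _ => 1) <= M * m0) by (apply Rmult_le_compat_l; auto).
    lra. }
  split; [|apply up; auto].
  pose proof (up (fun w => -1 * psi w) (C0G_scal _ _ Hpsi)
     ltac:(intro w; specialize (HM w); cbv beta; rewrite Rabs_mult; replace (Rabs (-1)) with 1 by (rewrite Rabs_left; lra); lra)).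
  pose proof (Ha psi (fun w => -1 * psi w) Hpsi (C0G_scal _ _ Hpsi)) as h.
  cbv beta in h. replace (fun w : W => psi w + -1 * psi w) with (fun _ : W => 0) in h by (apply functional_extensionality; intro; ring).
  rewrite Sm_zero in h; auto. lra.
Qed.

Definition ms (psi : W -> R) : R := - Rinf (fun r => exists muh, Sm muh /\ r = - muh psi).

Lemma part2b : SM_nonzero (C0 d) mu0 ->
     (exists mustar : (W -> R) -> R,
        (is_SMplus (C0_Gamma d U f) mustar /\
         SM_le (C0 d) (push (pi_1 d U f) mustar) mu0 /\
         SM_eq (C0_Gamma d U f) (push (sigma_f d U f) mustar) mustar) /\
        forall muh : (W -> R) -> R,
          is_SMplus (C0_Gamma d U f) muh ->
          SM_le (C0 d) (push (pi_1 d U f) muh) mu0 ->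
          SM_eq (C0_Gamma d U f) (push (sigma_f d U f) muh) muh ->
          SM_le (C0_Gamma d U f) muh mustar).
Proof.
  intros Hnz. destruct (W_inh Hnz) as [w0 _]. pose proof (m0_pos Hnz) as hm.
  destruct (part2a Hnz) as [muh0 [H1 [_ [_ [H4 [_ H6]]]]]].
  assert (S0 : Sm muh0) by (split; [|split]; auto).
  assert (Mpos : forall (psi : W -> R) M, (forall w, Rabs (psi w) <= M) -> 0 <= M).
  { intros psi M HM. specialize (HM w0). pose proof (Rabs_pos (psi w0)). lra. }
  assert (ms_ge : forall muh (psi : W -> R), Sm muh -> C0_Gamma d U f psi -> muh psi <= ms psi).
  { intros muh psi Hm Hpsi. destruct (Gamma_bounded _ Hpsi) as [M HM].
    unfold ms. assert (Rinf (fun r => exists muh, Sm muh /\ r = - muh psi) <= - muh psi); [|lra].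
    apply (Rinf_le _ (- (M * m0))).
    - intros r [muh' [Hm' ->]]. destruct (Sm_bound muh' psi M Hm' Hpsi HM (Mpos _ _ HM)). lra.
    - eauto. }
  assert (ms_le : forall (psi : W -> R) a, C0_Gamma d U f psi -> (forall muh, Sm muh -> muh psi <= a) -> ms psi <= a).
  { intros psi a Hpsi H. unfold ms. assert (- a <= Rinf (fun r => exists muh, Sm muh /\ r = - muh psi)); [|lra].
    apply le_Rinf; [eauto|]. intros r [muh [Hm ->]]. specialize (H muh Hm). lra. }
  exists ms. split; [split; [|split]|].
  - split; [|split; [|split]].
    + intros a b Ha Hb. apply ms_le; [apply C0G_add; auto|]. intros muh Hm.
      pose proof Hm as [[Hadd _] _]. pose proof (Hadd a b Ha Hb).
      pose proof (ms_ge muh a Hm Ha). pose proof (ms_ge muh b Hm Hb). lra.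
    + intros c a hc Ha. destruct (Rle_lt_or_eq_dec 0 c hc) as [hc'|<-].
      * apply Rle_antisym.
        -- apply ms_le; [apply C0G_scal; auto|]. intros muh Hm. pose proof Hm as [[_ [Hh _]] _].
           rewrite Hh; auto. apply Rmult_le_compat_l; auto.
        -- assert (ms a <= ms (fun w => c * a w) / c); [|apply (Rmult_le_compat_l c) in H; [field_simplify in H; lra|lra]].
           apply ms_le; auto. intros muh Hm. pose proof Hm as [[_ [Hh _]] _].
           pose proof (ms_ge muh _ Hm (C0G_scal c a Ha)) as h. rewrite Hh in h; auto.
           apply (Rmult_le_reg_l c); [lra|]. field_simplify; lra.
      * apply Rle_antisym.
        -- rewrite Rmult_0_l. apply ms_le; [apply C0G_scal; auto|]. intros muh Hm. pose proof Hm as [[_ [Hh _]] _].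
           rewrite Hh; auto. lra.
        -- rewrite Rmult_0_l. eapply Rle_trans; [|apply (ms_ge muh0); auto; apply C0G_scal; auto].
           destruct H1 as [_ [Hh _]]. rewrite Hh; auto. lra.
    + exists m0. intros a M Ha HM. destruct (Sm_bound muh0 a M S0 Ha HM (Mpos _ _ HM)).
      pose proof (ms_ge muh0 a S0 Ha).
      assert (ms a <= M * m0).
      { apply ms_le; auto. intros muh Hm. destruct (Sm_bound muh a M Hm Ha HM (Mpos _ _ HM)). auto. }
      apply Rabs_le. lra.
    + intros a b Ha Hb Hab. apply ms_le; auto. intros muh Hm. pose proof Hm as [[_ [_ [_ Hmo]]] _].
      apply Rle_trans with (muh b); [apply Hmo; auto|apply ms_ge; auto].
  - intros phi Hphi. unfold push. apply ms_le; [apply C0G_comp_pi; auto|].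
    intros muh [_ [Hle _]]. apply (Hle phi Hphi).
  - intros psi Hpsi. unfold push. apply Rle_antisym.
    + apply ms_le; [apply C0G_shift; auto|]. intros muh Hm. pose proof Hm as [_ [_ Hsh]].
      pose proof (Hsh psi Hpsi) as e. unfold push in e. rewrite e. apply ms_ge; auto.
    + apply ms_le; auto. intros muh Hm. pose proof Hm as [_ [_ Hsh]].
      pose proof (Hsh psi Hpsi) as e. unfold push in e. rewrite <- e. apply ms_ge; auto. apply C0G_shift; auto.
  - intros muh a b c psi Hpsi. apply ms_ge; auto. split; [|split]; auto.
Qed.

End Mu.
End Ctx.

Theorem theorem3p2 (X : Type) (d : X -> X -> R) (U : X -> Prop) (f : X -> X)
  (Hmet : is_metric d) (Hcpt : seq_compact d)
  (Hf : open_dense_map d U f) (Hgood : good_iterates d U f) :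
  (* 1) *)
  (forall muh : (GammaT d U f -> R) -> R,
     is_SMplus (C0_Gamma d U f) muh ->
     SM_eq (C0_Gamma d U f) (push (sigma_f d U f) muh) muh ->
     SM_le (C0 d) (push (pi_1 d U f) muh) (pushf d U f (push (pi_1 d U f) muh)))
  /\
  (* 2) *)
  (forall mu0 : (X -> R) -> R,
     is_SMplus (C0 d) mu0 -> SM_nonzero (C0 d) mu0 ->
     SM_eq (C0 d) (pushf d U f mu0) mu0 ->
     (exists muh0 : (GammaT d U f -> R) -> R,
        is_SMplus (C0_Gamma d U f) muh0 /\ is_linear_fn (C0_Gamma d U f) muh0 /\
        SM_nonzero (C0_Gamma d U f) muh0 /\
        SM_eq (C0_Gamma d U f) (push (sigma_f d U f) muh0) muh0 /\
        SMnorm (C0_Gamma d U f) muh0 = SMnorm (C0 d) mu0 /\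
        SM_le (C0 d) (push (pi_1 d U f) muh0) mu0)
     /\
     (exists mustar : (GammaT d U f -> R) -> R,
        (is_SMplus (C0_Gamma d U f) mustar /\
         SM_le (C0 d) (push (pi_1 d U f) mustar) mu0 /\
         SM_eq (C0_Gamma d U f) (push (sigma_f d U f) mustar) mustar) /\
        forall muh : (GammaT d U f -> R) -> R,
          is_SMplus (C0_Gamma d U f) muh ->
          SM_le (C0 d) (push (pi_1 d U f) muh) mu0 ->
          SM_eq (C0_Gamma d U f) (push (sigma_f d U f) muh) muh ->
          SM_le (C0_Gamma d U f) muh mustar)).
Proof.
  split.
  - intros muh H1 H2. eapply part1; eassumption.
  - intros mu0 Hsm Hnz Hinv. split.
    + eapply part2a; eassumption.
    + eapply part2b; eassumption.
Qed.
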